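(* Let $(X,d,\mu)$ be geometrically doubling and upper doubling with fixed dominating function $\lambda$. For $\varrho>1$ denote by $\mathrm{RBMO}_\varrho(\mu)$ the space $\mathrm{RBMO}(\mu)$ defined with parameter $\varrho$. Then $\mathrm{RBMO}_\varrho(\mu)$ does not depend on $\varrho$: for all $\varrho,\sigma>1$, $\mathrm{RBMO}_\varrho(\mu)=\mathrm{RBMO}_\sigma(\mu)$.
   Context: Balls $B=B(x,r)=\{y:d(y,x)<r\}$ have specified centre $c_B=x$ and radius $r_B=r>0$; $tB:=B(x,tr)$. Geometrically doubling: there is $N$ such that every ball $B(x,r)$ is covered by at most $N$ balls of radius $r/2$. Upper doubling: $\mu$ is a Borel measure, finite on bounded sets, and there are $\lambda:X\times(0,\infty)\to(0,\infty)$ and $C_\lambda$ with $r\mapsto\lambda(x,r)$ non-decreasing, $\lambda(x,2r)\le C_\lambda\lambda(x,r)$, $\mu(B(x,r))\le\lambda(x,r)$. A function $f\in L^1_{\mathrm{loc}}(\mu)$ (integrable on bounded sets) belongs to $\mathrm{RBMO}_\varrho(\mu)$ if there exist a number $A$ and, for every ball $B$, a number $f_B$ such that $\frac{1}{\mu(\varrho B)}\int_B|f-f_B|\,d\mu\le A$ for every ball $B$, and whenever $B\subset B_1$ are balls, $|f_B-f_{B_1}|\le A\{1+\int_{2B_1\setminus B}\frac{d\mu(x)}{\lambda(c_B,d(x,c_B))}\}$. The infimum of admissible $A$ is the norm $\|f\|_{\mathrm{RBMO}_\varrho}$. *)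

(* Defs.v *)
From HB Require Import structures.
From mathcomp Require Import all_boot all_order all_algebra.
From mathcomp Require Import all_classical all_reals all_analysis.
Set Implicit Arguments. Unset Strict Implicit. Unset Printing Implicit Defensive.
Import Order.TTheory GRing.Theory Num.Theory.
Local Open Scope classical_set_scope.
Local Open Scope ring_scope.

Section RBMO.
Context {disp : measure_display} {X : measurableType disp} {R : realType}.

Definition dball (dist : X -> X -> R) (x : X) (r : R) : set X :=
  [set y | dist y x < r].

Definition is_metric (dist : X -> X -> R) : Prop :=
  [/\ forall x y, 0 <= dist x y,
      forall x y, dist x y = 0 <-> x = y,
      forall x y, dist x y = dist y x &
      forall x y z, dist x z <= dist x y + dist y z].

Definition dopen (dist : X -> X -> R) (U : set X) : Prop :=
  forall x, U x -> exists2 r : R, 0 < r & dball dist x r `<=` U.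

Definition dbounded (dist : X -> X -> R) (A : set X) : Prop :=
  exists x r, A `<=` dball dist x r.

Definition geom_doubling (dist : X -> X -> R) : Prop :=
  exists N : nat, forall (x : X) (r : R), 0 < r ->
    exists s : seq X, (size s <= N)%N /\
      dball dist x r `<=` \bigcup_(y in [set` s]) dball dist y (r / 2).

Local Open Scope ereal_scope.

Definition finite_on_bounded (dist : X -> X -> R)
    (mu : {measure set X -> \bar R}) : Prop :=
  forall A, measurable A -> dbounded dist A -> mu A < +oo.

Definition upper_doubling (dist : X -> X -> R)
    (mu : {measure set X -> \bar R}) (lam : X -> R -> R) (C : R) : Prop :=
  [/\ forall x r, (0 < r)%R -> (0 < lam x r)%R,
      forall x r s, (0 < r)%R -> (r <= s)%R -> (lam x r <= lam x s)%R,
      forall x r, (0 < r)%R -> (lam x (2 * r) <= C * lam x r)%R &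
      forall x r, (0 < r)%R -> mu (dball dist x r) <= (lam x r)%:E].

Definition loc_integrable (dist : X -> X -> R)
    (mu : {measure set X -> \bar R}) (f : X -> R) : Prop :=
  forall A, measurable A -> dbounded dist A -> mu.-integrable A (EFin \o f).

(* f in RBMO_rho(mu); the ball B(x,r) (r > 0) is indexed by its centre
   and radius, and fB x r is the number f_B *)
Definition RBMO (dist : X -> X -> R) (mu : {measure set X -> \bar R})
    (lam : X -> R -> R) (rho : R) (f : X -> R) : Prop :=
  loc_integrable dist mu f /\
  exists (A : R) (fB : X -> R -> R),
    (forall x r, (0 < r)%R ->
       \int[mu]_(y in dball dist x r) (`|f y - fB x r|)%:E
         <= A%:E * mu (dball dist x (rho * r))) /\
    (forall x r x1 r1, (0 < r)%R -> (0 < r1)%R ->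
       dball dist x r `<=` dball dist x1 r1 ->
       (`|fB x r - fB x1 r1|)%:E <=
         A%:E * (1 + \int[mu]_(y in dball dist x1 (2 * r1) `\` dball dist x r)
                      ((lam x (dist y x))^-1)%:E)).

End RBMO.

(* Main.v *)
Require Import Defs.
From HB Require Import structures.
From mathcomp Require Import all_boot all_order all_algebra.
From mathcomp Require Import all_classical all_reals all_analysis.
From mathcomp Require Import measurable_realfun.
From mathcomp Require Import ring lra.
Import Order.TTheory GRing.Theory Num.Theory.
Local Open Scope classical_set_scope.
Local Open Scope ring_scope.

Section Helpers.
Context {disp : measure_display} {X : measurableType disp} {R : realType}.
Variable (dist : X -> X -> R).
Hypothesis hmet : is_metric dist.

Lemma d_ge0 x y : 0 <= dist x y. Proof. by case: hmet. Qed.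
Lemma d_sym x y : dist x y = dist y x. Proof. by case: hmet. Qed.
Lemma d_tri x y z : dist x z <= dist x y + dist y z. Proof. by case: hmet. Qed.
Lemma d_xx x : dist x x = 0. Proof. by case: hmet => _ h _ _; apply/h. Qed.

Lemma ball_sub c r' x r : dist c x + r' <= r ->
  dball dist c r' `<=` dball dist x r.
Proof.
move=> h z; rewrite /dball /= => hz.
apply: (le_lt_trans (d_tri z c x)); rewrite addrC.
by apply: (lt_le_trans _ h); rewrite ltrD2l.
Qed.

Lemma ball_center x r : 0 < r -> dball dist x r x.
Proof. by move=> r0; rewrite /dball /= d_xx. Qed.

Lemma ball_open x r : dopen dist (dball dist x r).
Proof.
move=> y; rewrite /dball /= => hy; exists (r - dist y x); first by rewrite subr_gt0.
move=> z; rewrite /dball /= => hz; apply: (le_lt_trans (d_tri z y x)).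
by rewrite -ltrBrDr.
Qed.

Hypothesis hmeas : @measurable disp X = <<s dopen dist >>.

Lemma ball_meas x r : measurable (dball dist x r).
Proof. rewrite hmeas; apply: sub_gen_smallest; exact: ball_open. Qed.

Lemma ball_bdd x r : dbounded dist (dball dist x r).
Proof. by exists x, r. Qed.

Lemma sub_bdd A B : A `<=` B -> dbounded dist B -> dbounded dist A.
Proof. by move=> AB [x [r h]]; exists x, r; apply: subset_trans h. Qed.

End Helpers.

Section Integ.
Context {disp : measure_display} {X : measurableType disp} {R : realType}.
Variable (mu : {measure set X -> \bar R}).
Local Open Scope ereal_scope.

Lemma le_integral_nm D (f g : X -> \bar R) :
  (forall x, D x -> 0 <= f x) -> (forall x, D x -> f x <= g x) ->
  \int[mu]_(x in D) f x <= \int[mu]_(x in D) g x.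
Proof.
move=> f0 fg.
have g0 : forall x, D x -> 0 <= g x by move=> x Dx; exact: le_trans (f0 _ Dx) (fg _ Dx).
rewrite (ge0_integralE mu f0) (ge0_integralE mu g0) /=.
apply: ereal_sup_le => _ [h hf <-]; exists h => //= x.
apply: le_trans (hf x) _; rewrite /patch; case: ifP => // /[1!inE] Dx.
exact: fg.
Qed.

End Integ.
Section Cover.
Context {disp : measure_display} {X : measurableType disp} {R : realType}.
Variable (dist : X -> X -> R) (N : nat).
Hypothesis hN : forall x r, 0 < r -> exists s : seq X, (size s <= N)%N /\
      dball dist x r `<=` \bigcup_(y in [set` s]) dball dist y (r / 2).

Lemma cover_list (rr : R) : 0 < rr -> forall s : seq X, exists s' : seq X,
  (size s' <= N * size s)%N /\
  forall z, (exists2 y, y \in s & dball dist y rr z) ->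
            exists2 y, y \in s' & dball dist y (rr / 2) z.
Proof.
move=> rr0; elim=> [|y s [s' [hs' hcov]]].
  by exists [::]; split => // z [y].
have [sy [hsy hcy]] := @hN y rr rr0.
exists (sy ++ s'); split.
  by rewrite size_cat /= mulnS leq_add.
move=> z [y0]; rewrite inE => /orP [/eqP -> hz|y0s hz].
  by have [y1 y1s h1] := hcy z hz; exists y1 => //; rewrite mem_cat y1s.
have [y1 y1s h1] := hcov z (ex_intro2 _ _ y0 y0s hz).
by exists y1 => //; rewrite mem_cat y1s orbT.
Qed.

Lemma cover_pow k x r : 0 < r -> exists s : seq X, (size s <= N ^ k)%N /\
  forall z, dball dist x r z -> exists2 y, y \in s & dball dist y (r / 2 ^+ k) z.
Proof.
move=> r0; elim: k => [|k [s [hs hc]]].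
  by exists [:: x]; split => // z hz; exists x; rewrite ?inE ?expr0 ?divr1.
have [|s' [hs' hc']] := @cover_list (r / 2 ^+ k) _ s.
  by rewrite divr_gt0 // exprn_gt0.
exists s'; split.
  by rewrite expnS (leq_trans hs') // leq_mul2l hs orbT.
move=> z hz; have [y ys hy] := hc z hz.
have -> : r / 2 ^+ k.+1 = r / 2 ^+ k / 2.
  by rewrite exprS; field; rewrite expf_neq0.
exact: hc' (ex_intro2 _ _ y ys hy).
Qed.

End Cover.
Section IntCover.
Context {disp : measure_display} {X : measurableType disp} {R : realType}.
Variable (dist : X -> X -> R) (mu : {measure set X -> \bar R}).
Hypothesis hball : forall y t, measurable (dball dist y t).
Local Open Scope ereal_scope.

Lemma int_cover (g : X -> \bar R) (t : R) :
  forall (s : seq X) (D : set X), measurable D -> measurable_fun D g -> (forall x, D x -> 0 <= g x) ->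
  (forall z, D z -> exists2 y, y \in s & dball dist y t z) ->
  \int[mu]_(x in D) g x <= \sum_(y <- s) \int[mu]_(x in D `&` dball dist y t) g x.
Proof.
elim=> [|y s IH] D mD mg g0 hc.
  have -> : D = set0 by apply/seteqP; split => // z /hc [y].
  by rewrite integral_set0 big_nil.
rewrite big_cons.
have mB := hball y t.
have hD : D = (D `&` dball dist y t) `|` (D `\` dball dist y t).
  apply/seteqP; split => z.
    by move=> Dz; case: (pselect (dball dist y t z)) => h; [left|right].
  by case=> -[].
have E : \int[mu]_(x in D) g x = \int[mu]_(x in D `&` dball dist y t) g x +
    \int[mu]_(x in D `\` dball dist y t) g x.
  rewrite {1}hD; apply: ge0_integral_setU.
  - exact: measurableI.
  - exact: measurableD.
  - by rewrite -hD.
  - by rewrite -hD.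
  - rewrite /disj_set; apply/eqP; apply/seteqP; split => z //.
    by move=> [[_ h] [_ h']].
rewrite E leeD2l //.
have mDB : measurable (D `\` dball dist y t) by exact: measurableD.
apply: le_trans (IH _ mDB _ _ _) _.
- by apply: measurable_funS mg => // z [].
- by move=> z [Dz _]; exact: g0.
- move=> z [Dz nB]; have [y' ] := hc z Dz.
  rewrite inE => /orP [/eqP -> //|ys h]; by exists y'.
apply: lee_sum => y' _; apply: ge0_subset_integral.
- exact: measurableI.
- exact: measurableI.
- by apply: measurable_funS mg => // z [].
- by move=> z [Dz _]; exact: g0.
- by move=> z [[Dz _] h]; split.
Qed.

End IntCover.
Section Lam.
Context {disp : measure_display} {X : measurableType disp} {R : realType}.
Variable (dist : X -> X -> R) (mu : {measure set X -> \bar R}).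
Variables (lam : X -> R -> R) (C : R).
Hypothesis hud : upper_doubling dist mu lam C.
Hypothesis hball : forall y t, measurable (dball dist y t).

Lemma lam_pow x r m : 0 < r -> lam x (2 ^+ m * r) <= C ^+ m * lam x r.
Proof.
case: hud => lpos lmono ldbl _ r0.
have C0 : 0 <= C.
  have h := ldbl x r r0.
  have h2 := lpos x (2 * r) (mulr_gt0 (ltr0Sn _ 1) r0).
  have : 0 < C * lam x r by exact: lt_le_trans h2 h.
  by rewrite pmulr_lgt0 ?lpos // => /ltW.
elim: m => [|m IH]; first by rewrite expr0 !mul1r.
rewrite exprS -mulrA; apply: le_trans (ldbl _ _ _) _.
  by rewrite mulr_gt0 // exprn_gt0.
by rewrite exprS -mulrA ler_wpM2l.
Qed.

Local Open Scope ereal_scope.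

Lemma ann_bound c0 (r0 : R) m (D : set X) : (0 < r0)%R -> measurable D ->
  D `<=` dball dist c0 (2 ^+ m * r0) ->
  (forall z, D z -> ~ dball dist c0 r0 z) ->
  \int[mu]_(y in D) ((lam c0 (dist y c0))^-1)%:E <= (C ^+ m)%:E.
Proof.
move=> r0p mD sub out.
case: hud => lpos lmono ldbl lmu.
have lr0 := lpos c0 r0 r0p.
have dz : forall z, D z -> (r0 <= dist z c0)%R.
  by move=> z /out; rewrite /dball /= => h; rewrite leNgt; apply/negP.
apply: le_trans (@le_integral_nm _ _ _ mu D _ (fun _ => ((lam c0 r0)^-1)%:E) _ _) _.
- move=> z Dz; rewrite lee_fin invr_ge0 ltW // lpos //.
  exact: lt_le_trans r0p (dz _ Dz).
- move=> z Dz; have dp := lt_le_trans r0p (dz _ Dz).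
  by rewrite lee_fin lef_pV2 ?posrE ?lpos //; apply: lmono => //; exact: dz.
rewrite integral_cst //.
have hm : mu D <= (C ^+ m * lam c0 r0)%:E.
  apply: le_trans (le_measure mu (mem_set mD) (mem_set (hball c0 (2 ^+ m * r0))) sub) _.
  apply: le_trans (lmu _ _ _) _; first by rewrite mulr_gt0 // exprn_gt0.
  by rewrite lee_fin lam_pow.
apply: le_trans (lee_wpmul2l _ hm) _; first by rewrite lee_fin invr_ge0 ltW.
rewrite /= -EFinM lee_fin mulrC -mulrA mulfV ?mulr1 //.
exact: lt0r_neq0.
Qed.

End Lam.

Lemma sum_cst_seq {R : realType} (T : Type) (s : seq T) (c : R) :
  \sum_(y <- s) c = (size s)%:R * c.
Proof.
elim: s => [|a s IH]; first by rewrite big_nil mul0r.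
by rewrite big_cons IH /= -add1n natrD mulrDl mul1r.
Qed.

Lemma pow_bound {R : realType} (q : R) : 0 <= q -> exists k : nat, q <= 2 ^+ k.
Proof.
move=> q0; exists (Num.Def.archi_bound q).
apply: le_trans (ltW (archi_boundP q0)) _.
rewrite -natrX ler_nat; apply: ltnW; exact: ltn_expl.
Qed.

Section Main.
Context {disp : measure_display} {X : measurableType disp} {R : realType}.
Variable (dist : X -> X -> R) (mu : {measure set X -> \bar R}).
Variables (lam : X -> R -> R) (C : R).
Hypothesis hmet : is_metric dist.
Hypothesis hmeas : @measurable disp X = <<s dopen dist >>.
Hypothesis hgd : geom_doubling dist.
Hypothesis hfin : finite_on_bounded dist mu.
Hypothesis hud : upper_doubling dist mu lam C.

Lemma rbmo_change (rho sigma : R) (f : X -> R) : 1 < rho -> 1 < sigma ->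
  RBMO dist mu lam rho f -> RBMO dist mu lam sigma f.
Proof.
move=> rho1 sig1 [hloc [A [fB [H1 H2]]]].
have hball := @ball_meas _ _ _ dist hmet hmeas.
have [N hN] := hgd.
have tri := @d_tri _ _ _ dist hmet.
have dsym := @d_sym _ _ _ dist hmet.
have dxx := @d_xx _ _ _ dist hmet.
have bsub := @ball_sub _ _ _ dist hmet.
have [lpos lmono ldbl lmu] := hud.
have s1 : 0 < sigma - 1 by rewrite subr_gt0.
have [k hk0] : exists k : nat, (rho + 1) / (sigma - 1) <= 2 ^+ k.
  by apply: pow_bound; rewrite divr_ge0 // ?ltW //; lra.
have hk : rho + 1 <= (sigma - 1) * 2 ^+ k.
  by rewrite mulrC -ler_pdivrMr.
have [m hm] : exists m : nat, 2 * sigma * 2 ^+ k + 2 ^+ k + 1 <= 2 ^+ m.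
  apply: pow_bound.
  have h2 : 0 <= (2:R) ^+ k by rewrite exprn_ge0.
  have h3 : 0 <= sigma * 2 ^+ k by rewrite mulr_ge0 //; lra.
  lra.
have k1 : 1 <= (2 : R) ^+ k by apply: exprn_ege1; lra.
have Cm := normr_ge0 (C ^+ m).
pose K0 := 3 + 2 * `|C ^+ m|.
have K00 : 0 <= K0 by rewrite /K0; lra.
pose A0 := `|A|.
have A00 : 0 <= A0 by exact: normr_ge0.
have AA0 : A <= A0 by exact: ler_norm.
pose A' := A0 * ((N ^ k)%:R * K0 + 1).
have A0A' : A0 <= A'.
  by rewrite /A' ler_peMr // lerDr mulr_ge0.
split => //; exists A', fB; split; last first.
  move=> x r x1 r1 r0 r10 sub.
  apply: le_trans (H2 x r x1 r1 r0 r10 sub) _.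
  apply: lee_wpmul2r; last by rewrite lee_fin; lra.
  apply: adde_ge0 => //; apply: integral_ge0 => y [_ hy].
  rewrite lee_fin invr_ge0 ltW // lpos //.
  by apply: lt_le_trans r0 _; rewrite leNgt; apply/negP.
move=> x r r0.
have r2k : 0 < (2 : R) ^+ k by rewrite exprn_gt0.
pose t := r / 2 ^+ k.
have t0 : 0 < t by rewrite divr_gt0.
have rE : r = 2 ^+ k * t by rewrite /t mulrC -mulrA mulVf ?mulr1 // gt_eqF.
have [s [hs hc]] := @cover_pow _ _ _ dist N hN k x r r0.
have mB := hball x r.
have sr0 : 0 < sigma * r by rewrite mulr_gt0 //; lra.
have mS := hball x (sigma * r).
have finS : (mu (dball dist x (sigma * r)) < +oo)%E.
  by apply: hfin => //; exact: ball_bdd.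
have Sge0 := measure_ge0 mu (dball dist x (sigma * r)).
pose M := fine (mu (dball dist x (sigma * r))).
have ME : mu (dball dist x (sigma * r)) = M%:E by rewrite fineK // ge0_fin_numE.
have M0 : 0 <= M by rewrite -lee_fin -ME.
have mf : forall D, measurable D -> dbounded dist D -> measurable_fun D f.
  by move=> D mD bD; have /integrableP[+ _] := hloc D mD bD; move/measurable_EFinP.
have mg : forall D c, measurable D -> dbounded dist D ->
    measurable_fun D (fun y => (`|f y - c|)%:E).
  move=> D c mD bD; apply/measurable_EFinP.
  apply: measurableT_comp; first exact: normr_measurable.
  by apply: measurable_funB; [exact: mf|exact: measurable_cst].
have gge0 : forall D c, forall y, D y -> (0 <= (`|f y - c|)%:E)%E.
  by move=> D c y _; rewrite lee_fin normr_ge0.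
apply: le_trans (@int_cover _ _ _ dist mu hball _ t s _ mB (mg _ _ mB (ball_bdd _ _ _))
  (gge0 _ _) hc) _.
have per : forall y, (\int[mu]_(z in dball dist x r `&` dball dist y t)
    (`|f z - fB x r|)%:E <= (A0 * K0 * M)%:E)%E.
  move=> y.
  have KM0 : 0 <= A0 * K0 * M by rewrite !mulr_ge0.
  case: (pselect (exists z, dball dist x r z /\ dball dist y t z)); last first.
    move=> nz; have -> : dball dist x r `&` dball dist y t = set0.
      by apply/seteqP; split => w // [? ?]; apply: nz; exists w.
    by rewrite integral_set0 lee_fin.
  move=> [z [Bz yz]].
  have dyx : dist y x < r + t.
    apply: le_lt_trans (tri y z x) _.
    rewrite (dsym y z); move: Bz yz; rewrite /dball /= => h1 h2; lra.
  have hrt : (rho + 1) * t <= (sigma - 1) * r.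
    have := ler_wpM2r (ltW t0) hk; rewrite rE; lra.
  have sub_rho : dball dist y (rho * t) `<=` dball dist x (sigma * r).
    by apply: bsub => //; lra.
  have sub_t : dball dist y t `<=` dball dist x (sigma * r).
    apply: bsub => //.
    have : t <= rho * t by rewrite ler_peMl //; [exact: ltW|exact: ltW].
    lra.
  have sub_B : dball dist x r `<=` dball dist x (sigma * r).
    apply: bsub => //; rewrite dxx add0r ler_peMl //; [exact: ltW|exact: ltW].
  pose D := dball dist x r `&` dball dist y t.
  have mD : measurable D by exact: measurableI.
  have bD : dbounded dist D by exists x, r => w [].
  pose c := `|fB y t - fB x r|.
  have step1 : (\int[mu]_(w in D) (`|f w - fB x r|)%:E <=
      \int[mu]_(w in D) ((`|f w - fB y t|)%:E + c%:E))%E.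
    apply: le_integral_nm => [w _|w _]; first by rewrite lee_fin.
    rewrite -EFinD lee_fin /c.
    by rewrite (le_trans (ler_distD (fB y t) _ _)).
  apply: le_trans step1 _.
  have c0 : 0 <= c by exact: normr_ge0.
  rewrite (ge0_integralD mu mD (f1 := fun w => (`|f w - fB y t|)%:E)
    (f2 := fun _ => c%:E) (gge0 _ _) (mg _ _ mD bD) _ (measurable_cst _)); last first.
    by move=> w _; rewrite lee_fin.
  rewrite integral_cst //.
  have i1 : (\int[mu]_(w in D) (`|f w - fB y t|)%:E <= (A0 * M)%:E)%E.
    have mBy := hball y t.
    apply: le_trans (ge0_subset_integral mu mD mBy (mg _ _ mBy (ball_bdd _ _ _)) (gge0 _ _) _) _.
      by move=> w [].
    apply: le_trans (H1 y t t0) _.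
    apply: le_trans (lee_wpmul2r (measure_ge0 _ _) (_ : A%:E <= A0%:E)%E) _.
      by rewrite lee_fin.
    rewrite EFinM; apply: lee_wpmul2l; first by rewrite lee_fin.
    rewrite -ME; exact: (le_measure mu (mem_set (hball _ _)) (mem_set mS) sub_rho).
  have muD : (mu D <= M%:E)%E.
    rewrite -ME; apply: (le_measure mu (mem_set mD) (mem_set mS)).
    by move=> w [Bw _]; exact: sub_B.
  have key : forall c1 r1' x1 r1, 0 < r1' -> 0 < r1 ->
      dball dist c1 r1' `<=` dball dist x1 r1 ->
      dball dist x1 (2 * r1) `<=` dball dist c1 (2 ^+ m * r1') ->
      `|fB c1 r1' - fB x1 r1| <= A0 * (1 + `|C ^+ m|).
    move=> c1 r1' x1 r1 p0 p1 sb sb2.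
    have h := H2 _ _ _ _ p0 p1 sb.
    have I0 : (0 <= \int[mu]_(w in dball dist x1 (2 * r1) `\` dball dist c1 r1')
        ((lam c1 (dist w c1))^-1)%:E)%E.
      apply: integral_ge0 => w [_ hw].
      rewrite lee_fin invr_ge0 ltW // lpos //.
      by apply: lt_le_trans p0 _; rewrite leNgt; apply/negP.
    have Ib := @ann_bound _ _ _ dist mu lam C hud hball c1 r1' m
      (dball dist x1 (2 * r1) `\` dball dist c1 r1') p0
      (measurableD (hball _ _) (hball _ _)) (fun w hw => sb2 w hw.1)
      (fun w hw => hw.2).
    rewrite -lee_fin; apply: le_trans h _.
    apply: le_trans (lee_wpmul2r (adde_ge0 _ I0) (_ : A%:E <= A0%:E)%E) _.
    - by rewrite lee_fin.
    - by rewrite lee_fin.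
    rewrite EFinM; apply: lee_wpmul2l; first by rewrite lee_fin.
    rewrite EFinD; apply: leeD2l; apply: le_trans Ib _; rewrite lee_fin.
    exact: ler_norm.
  have k1a := key y t x (sigma * r) t0 sr0 sub_t.
  have k2a := key x r x (sigma * r) r0 sr0 sub_B.
  have hcb : c <= 2 * (A0 * (1 + `|C ^+ m|)).
    have e1 : `|fB y t - fB x r| <= `|fB y t - fB x (sigma * r)| +
        `|fB x (sigma * r) - fB x r| by exact: ler_distD.
    have h1 : `|fB y t - fB x (sigma * r)| <= A0 * (1 + `|C ^+ m|).
      apply: k1a; apply: bsub.
      have := ler_wpM2r (ltW t0) hm; rewrite rE dsym; lra.
    have h2 : `|fB x (sigma * r) - fB x r| <= A0 * (1 + `|C ^+ m|).
      rewrite distrC; apply: k2a; apply: bsub; rewrite dxx add0r.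
      have := ler_wpM2r (ltW r0) hm.
      have : sigma * r <= sigma * r * 2 ^+ k.
        by rewrite ler_peMr // mulr_ge0 //; [lra|exact: ltW].
      have : 0 <= 2 ^+ k * r by rewrite mulr_ge0 // ltW.
      lra.
    rewrite /c; lra.
  have e2 : (c%:E * mu D <= (c * M)%:E)%E.
    by rewrite EFinM; apply: lee_wpmul2l; rewrite ?lee_fin.
  apply: le_trans (leeD i1 e2) _.
  rewrite -EFinD lee_fin.
  have hcb' : A0 + c <= A0 * K0 by rewrite /K0; lra.
  have := ler_wpM2r M0 hcb'; lra.
apply: le_trans (lee_sum s (fun y _ => per y)) _.
rewrite sumEFin sum_cst_seq ME -EFinM lee_fin.
have hsz : (size s)%:R <= (N ^ k)%:R :> R by rewrite ler_nat.
apply: le_trans (_ : _ <= (N ^ k)%:R * (A0 * K0 * M)) _.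
  by apply: ler_wpM2r => //; rewrite !mulr_ge0.
have -> : A' * M = (N ^ k)%:R * (A0 * K0 * M) + A0 * M by rewrite /A'; ring.
by rewrite lerDl mulr_ge0.
Qed.

End Main.

Theorem lemma4p4 (disp : measure_display) (X : measurableType disp)
    (R : realType) (dist : X -> X -> R) (mu : {measure set X -> \bar R})
    (lam : X -> R -> R) (C : R) :
  is_metric dist ->
  (@measurable disp X = <<s dopen dist >>) ->
  geom_doubling dist ->
  finite_on_bounded dist mu ->
  upper_doubling dist mu lam C ->
  forall rho sigma : R, 1 < rho -> 1 < sigma ->
  forall f : X -> R, RBMO dist mu lam rho f <-> RBMO dist mu lam sigma f.
Proof.
move=> hmet hmeas hgd hfin hud rho sigma rho1 sig1 f; split.
  exact: (@rbmo_change _ _ _ dist mu lam C hmet hmeas hgd hfin hud rho sigma f rho1 sig1).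
exact: (@rbmo_change _ _ _ dist mu lam C hmet hmeas hgd hfin hud sigma rho f sig1 rho1).
Qed.
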